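(* Let $f(x)=\frac12x^\top Ax$ with $A\in\mathbb{R}^{d\times d}$ symmetric, $\eta>0$, and let $(x_k,v_k)$ be the leapfrog iterates from $(x_0,v_0)$: $v_{k+1/2}=v_k-\frac\eta2\nabla f(x_k)$, $x_{k+1}=x_k+\eta v_{k+1/2}$, $v_{k+1}=v_{k+1/2}-\frac\eta2\nabla f(x_{k+1})$. Then for every $k\ge0$, $$x_k=\Big(\sum_{j=0}^kD_{j,k}(\eta^2A)^j\Big)x_0+\eta\Big(\sum_{j=0}^{k-1}E_{j,k}(\eta^2A)^j\Big)v_0,$$ where $D_{j,k}=(-1)^j\frac{k}{k+j}\binom{k+j}{2j}$ (with $D_{0,0}=1$) and $E_{j,k}=(-1)^j\binom{k+j}{2j+1}$. *)

(* Defs.v *)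
From mathcomp Require Import all_boot all_order all_algebra.
Set Implicit Arguments. Unset Strict Implicit. Unset Printing Implicit Defensive.
Import Order.TTheory GRing.Theory Num.Theory.
Local Open Scope ring_scope.

(* Gradient of the quadratic f(x) = 1/2 x^T A x, i.e. (1/2)(A + A^T) x.
   (For symmetric A this is A x.) *)
Definition grad_quad (R : realFieldType) (d : nat) (A : 'M[R]_d) (x : 'cV[R]_d)
  : 'cV[R]_d := (2^-1) *: ((A + A^T) *m x).

Definition leapfrog_step (R : realFieldType) (d : nat) (A : 'M[R]_d) (eta : R)
  (p : 'cV[R]_d * 'cV[R]_d) : 'cV[R]_d * 'cV[R]_d :=
  let x := p.1 in let v := p.2 in
  let vh := v - (eta / 2) *: grad_quad A x in
  let x' := x + eta *: vh in
  let v' := vh - (eta / 2) *: grad_quad A x' in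
  (x', v').

Definition leapfrog (R : realFieldType) (d : nat) (A : 'M[R]_d) (eta : R)
  (x0 v0 : 'cV[R]_d) (k : nat) : 'cV[R]_d * 'cV[R]_d :=
  iter k (leapfrog_step A eta) (x0, v0).

Definition Dcoef (R : realFieldType) (j k : nat) : R :=
  if (j == 0%N) && (k == 0%N) then 1
  else (-1) ^+ j * (k%:R / (k + j)%:R) * ('C(k + j, 2 * j))%:R.

Definition Ecoef (R : realFieldType) (j k : nat) : R :=
  (-1) ^+ j * ('C(k + j, (2 * j).+1))%:R.

(* Main.v *)
Require Import Defs.
From mathcomp Require Import all_boot all_order all_algebra.
From mathcomp Require Import ring lra zify.
Import Order.TTheory GRing.Theory Num.Theory.
Local Open Scope ring_scope.

Lemma binrec n m : ('C(n.+2, m.+2) + 'C(n, m.+2) = 2 * 'C(n.+1, m.+2) + 'C(n, m))%N.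
Proof. rewrite !binS. lia. Qed.

Definition gD j k : nat := ('C(k + j, 2 * j) + 'C(k.-1 + j, 2 * j))%N.
Definition gE j k : nat := 'C(k + j, (2 * j).+1).

Lemma gD_rec j k : (gD j k.+2 + gD j k = 2 * gD j k.+1 + (if j is j'.+1 then gD j' k.+1 else 0))%N.
Proof.
rewrite /gD. case: j => [|j]; first by rewrite !muln0 !bin0.
have E1 : forall n, (n + j.+1 = (n + j).+1)%N by move=> n; lia.
have E2 : (2 * j.+1 = (2 * j).+2)%N by lia.
rewrite !E1 E2 /=.
case: k => [|k] /=.
- rewrite !add0n. clear E1 E2. case: j => [|j] /=; first by rewrite !muln0.
  case: j => [|j]; first by []. rewrite !bin_small; lia.
- rewrite !addSn. have := binrec (k + j).+2 (2 * j). have := binrec (k + j).+1 (2 * j). lia.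
Qed.


Lemma gE_rec j k : (gE j k.+2 + gE j k = 2 * gE j k.+1 + (if j is j'.+1 then gE j' k.+1 else 0))%N.
Proof.
rewrite /gE. case: j => [|j]; first by rewrite !muln0 !addn0 !bin1; lia.
have E1 : forall n, (n + j.+1 = (n + j).+1)%N by move=> n; lia.
have E2 : ((2 * j.+1).+1 = (2 * j).+1.+2)%N by lia.
rewrite !E1 E2 /= !addSn. have := binrec (k + j).+2 (2 * j).+1. have := binrec (k + j).+1 (2 * j).+1. lia.
Qed.

Lemma sign_rec (R : realFieldType) (g : nat -> nat -> nat) (s : R) j k :
 (g j k.+2 + g j k = 2 * g j k.+1 + (if j is j'.+1 then g j' k.+1 else 0))%N ->
 (-1)^+j * (g j k.+2)%:R * s = 2 * ((-1)^+j * (g j k.+1)%:R * s)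
   - (if j is j'.+1 then (-1)^+j' * (g j' k.+1)%:R * s else 0) - (-1)^+j * (g j k)%:R * s.
Proof.
move/(congr1 (GRing.natmul (1 : R))); rewrite !natrD => H.
have -> : (g j k.+2)%:R = (g j k.+1)%:R + ((g j k.+1)%:R + 0) + (if j is j'.+1 then g j' k.+1 else 0)%:R - (g j k)%:R :> R.
  by rewrite -H addrK.
case: j H => [|j] H /=; rewrite ?exprS; ring.
Qed.

Lemma Dalt (R : realFieldType) j k : Dcoef R j k = (-1)^+j * (gD j k)%:R * 2^-1.
Proof.
rewrite /Dcoef /gD. case: k => [|k].
  case: j => [|j] /=; first by rewrite !bin0 expr0; field.
  rewrite mul0r mulr0 mul0r add0n bin_small; last lia. by rewrite mulr0 mul0r.
rewrite andbF /=.
have Hn : ((2 * k.+1) * 'C(k.+1 + j, 2 * j) = (k.+1 + j) * ('C(k.+1 + j, 2 * j) + 'C(k + j, 2 * j)))%N.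
  have := mul_bin_down (k.+1 + j) (2 * j). rewrite !addSn /=.
  case: (leqP j k.+1) => Hjk.
  - have -> : ((k + j).+1 - 2 * j = k.+1 - j)%N by lia. nia.
  - rewrite (bin_small (n := (k + j).+1)); last lia. rewrite bin_small; last lia. lia.
move/(congr1 (GRing.natmul (1 : R))): Hn; rewrite !natrM natrD => Hn.
have Hz : (k.+1 + j)%:R != 0 :> R by rewrite pnatr_eq0; lia.
have -> : ('C(k.+1 + j, 2 * j) + 'C(k + j, 2 * j))%:R = 2%:R * (k.+1)%:R * ('C(k.+1 + j, 2 * j))%:R / (k.+1 + j)%:R :> R.
  rewrite Hn -natrD; field; apply/eqP => H0; have := ler0n R k; have := ler0n R j; lra.
field; apply/eqP => H0; have := ler0n R k; have := ler0n R j; lra.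
Qed.
Section M.
Variables (R : realFieldType) (d : nat) (B : 'M[R]_d).

Definition S (c : nat -> R) n := \sum_(0 <= j < n) c j *: B ^+ j.

Lemma S_shift c n : B *m S c n = S (fun j => if j is j'.+1 then c j' else 0) n.+1.
Proof.
rewrite /S big_nat_recl // scale0r add0r mulmx_sumr.
apply: eq_bigr => j _. by rewrite -scalemxAr mulmxE exprS.
Qed.

Lemma S_ext c n m : (n <= m)%N -> (forall j, (n <= j)%N -> c j = 0) -> S c n = S c m.
Proof.
move=> Hnm Hc. rewrite /S [RHS](big_cat_nat _ (n := n)) //= [X in _ + X]big1_seq ?addr0 //.
move=> j /andP[_]; rewrite mem_index_iota => /andP[Hj _]. by rewrite Hc // scale0r.
Qed.

Lemma S_comb c c1 c2 c3 n : (forall j, c j = 2 * c1 j - c2 j - c3 j) ->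
  S c n = 2 *: S c1 n - S c2 n - S c3 n.
Proof.
move=> Hc. rewrite /S scaler_sumr -!sumrB. apply: eq_bigr => j _.
by rewrite Hc !scalerBl scalerA.
Qed.
End M.

Lemma D_zero (R : realFieldType) j k : (k < j)%N -> Dcoef R j k = 0.
Proof.
move=> H. rewrite /Dcoef. have -> : (j == 0%N) = false by apply/eqP; lia.
by rewrite /= bin_small ?mulr0 //; lia.
Qed.

Lemma E_zero (R : realFieldType) j k : (k <= j)%N -> Ecoef R j k = 0.
Proof. move=> H. by rewrite /Ecoef bin_small ?mulr0 //; lia. Qed.

Lemma D_rec (R : realFieldType) j k : Dcoef R j k.+2 =
  2 * Dcoef R j k.+1 - (if j is j'.+1 then Dcoef R j' k.+1 else 0) - Dcoef R j k.
Proof. case: j => [|j] /=; rewrite !Dalt. exact: (@sign_rec R gD (2^-1) 0 k (gD_rec 0 k)). exact: (@sign_rec R gD (2^-1) j.+1 k (gD_rec j.+1 k)). Qed.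

Lemma E_rec (R : realFieldType) j k : Ecoef R j k.+2 =
  2 * Ecoef R j k.+1 - (if j is j'.+1 then Ecoef R j' k.+1 else 0) - Ecoef R j k.
Proof.
have Ea : forall j k, Ecoef R j k = (-1)^+j * (gE j k)%:R * 1 by move=> *; rewrite mulr1.
case: j => [|j] /=; rewrite !Ea. exact: (@sign_rec R gE 1 0 k (gE_rec 0 k)). exact: (@sign_rec R gE 1 j.+1 k (gE_rec j.+1 k)).
Qed.

Lemma gradE (R : realFieldType) d (A : 'M[R]_d) x : A^T = A -> grad_quad A x = A *m x.
Proof.
move=> hA. rewrite /grad_quad hA mulmxDl scalerDr -scalerDl.
have -> : (2^-1 + 2^-1 : R) = 1 by field. by rewrite scale1r.
Qed.

Theorem lemma12 (R : realFieldType) (d : nat) (A : 'M[R]_d) (eta : R)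
  (x0 v0 : 'cV[R]_d) (hA : A^T = A) (heta : 0 < eta) (k : nat) :
  (leapfrog A eta x0 v0 k).1 =
    (\sum_(0 <= j < k.+1) Dcoef R j k *: (eta ^+ 2 *: A) ^+ j) *m x0
    + eta *: ((\sum_(0 <= j < k) Ecoef R j k *: (eta ^+ 2 *: A) ^+ j) *m v0).
Proof.
set B := eta ^+ 2 *: A.
set X := fun k => (leapfrog A eta x0 v0 k).1.
set W := fun k => eta *: (leapfrog A eta x0 v0 k).2.
have BE : forall x : 'cV[R]_d, B *m x = eta ^+ 2 *: (A *m x) by move=> x; rewrite scalemxAl.
have R1 : forall k, X k.+1 = X k - 2^-1 *: (B *m X k) + W k.
  move=> n; rewrite /X /W /leapfrog iterS /leapfrog_step /= !gradE // BE.
  apply/matrixP => i j; rewrite !mxE. ring.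
have R2 : forall k, W k.+1 = W k - 2^-1 *: (B *m X k) - 2^-1 *: (B *m X k.+1).
  move=> n; rewrite /X /W /leapfrog iterS /leapfrog_step /= !gradE // !BE.
  apply/matrixP => i j; rewrite !mxE. ring.
have R3 : forall k, X k.+2 = 2 *: X k.+1 - B *m X k.+1 - X k.
  move=> n. rewrite R1 R2.
  have Hw : W n = X n.+1 - X n + 2^-1 *: (B *m X n).
    rewrite R1. move: (B *m X n) (W n) (X n) => u w a.
    apply/matrixP => i j; rewrite !mxE. ring.
  rewrite Hw. move: (X n.+1) (X n) => a1 a0. move: (B *m a1) (B *m a0) => u1 u0.
  apply/matrixP => i j; rewrite !mxE. by field.
pose P k := @S R d B (fun j => Dcoef R j k) k.+1.
pose Q k := @S R d B (fun j => Ecoef R j k) k.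
have PR : forall k, P k.+2 = 2 *: P k.+1 - B *m P k.+1 - P k.
  move=> n. rewrite /P S_shift (@S_ext R d B (fun j => Dcoef R j n.+1) n.+2 n.+3) //;
    last by move=> j Hj; rewrite D_zero.
  rewrite (@S_ext R d B (fun j => Dcoef R j n) n.+1 n.+3) //;
    last by move=> j Hj; rewrite D_zero.
  apply: S_comb => j. exact: D_rec. lia.
have QR : forall k, Q k.+2 = 2 *: Q k.+1 - B *m Q k.+1 - Q k.
  move=> n. rewrite /Q S_shift (@S_ext R d B (fun j => Ecoef R j n.+1) n.+1 n.+2) //;
    last by move=> j Hj; rewrite E_zero.
  rewrite (@S_ext R d B (fun j => Ecoef R j n) n n.+2) //;
    last by move=> j Hj; rewrite E_zero.
  apply: S_comb => j. exact: E_rec. lia.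
have main : forall k, X k = P k *m x0 + Q k *m (eta *: v0) /\
                      X k.+1 = P k.+1 *m x0 + Q k.+1 *m (eta *: v0).
  elim=> [|n [IH1 IH2]].
  - split.
    + rewrite /P /Q /S big_nat1 big_geq // mul0mx addr0 /Dcoef /= scale1r expr0 mul1mx //.
    + rewrite R1 /P /Q /S !big_nat_recr //= !big_geq // !add0r /Dcoef /Ecoef /=.
      rewrite /X /W /leapfrog /= !expr0 !expr1 !mulmxDl -!scalemxAl !mul1mx.
      rewrite !addn0 addn1 muln0 muln1 bin0 binn bin1.
      move: (B *m x0) => u. apply/matrixP => i j; rewrite !mxE.
      set s := (\sum_j0 _). by field.
  - split; first exact: IH2.
    rewrite R3 IH1 IH2 PR QR !mulmxBl -!scalemxAl !mulmxDr !mulmxA.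
    move: (P n.+1 *m x0) (Q n.+1 *m (eta *: v0)) (B *m P n.+1 *m x0) (B *m Q n.+1 *m (eta *: v0)) (P n *m x0) (Q n *m (eta *: v0)) => t1 t2 t3 t4 t5 t6.
    apply/matrixP => i j; rewrite !mxE. ring.
have [H _] := main k. move: H; rewrite /X /P /Q /S /= => ->. by rewrite scalemxAr.
Qed.
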